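(* Let $(\mathcal{E},\mathcal{L},\mathcal{B})$ be a weakly left resolving labelled space whose accommodating family $\mathcal{B}$ is closed under relative complements, let $S$ be its associated inverse semigroup, and let $\xi$ be a filter in $E(S)$ of finite type with word $\alpha\in\mathcal{L}^*$. Then $\xi$ is tight if and only if $\xi_{|\alpha|}$ is an ultrafilter in $\mathcal{B}_\alpha$ and at least one of the following holds: (a) there is a net $\{\mathcal{F}_\lambda\}_{\lambda\in\Lambda}\subseteq X_\alpha^{sink}$ converging to $\xi_{|\alpha|}$; (b) there is a net $\{(t_\lambda,\mathcal{F}_\lambda)\}_{\lambda\in\Lambda}$ with $t_\lambda\in\mathcal{A}$ and $\mathcal{F}_\lambda\in X_{\alpha t_\lambda}$ for each $\lambda$, such that $\{f_{\alpha[t_\lambda]}(\mathcal{F}_\lambda)\}_{\lambda\in\Lambda}$ converges to $\xi_{|\alpha|}$ and for every $b\in\mathcal{A}$ there is $\lambda_b\in\Lambda$ with $t_\lambda\neq b$ for all $\lambda\ge\lambda_b$.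
   Context: A directed graph $\mathcal{E}=(\mathcal{E}^0,\mathcal{E}^1,r,s)$ has countable nonempty vertex set, edge set, range/source maps; paths satisfy $r(\lambda_i)=s(\lambda_{i+1})$. A labelled graph over the alphabet $\mathcal{A}$ has a surjective labelling $\mathcal{L}:\mathcal{E}^1\to\mathcal{A}$ extended letterwise to paths. $\omega$ is the empty word, $\mathcal{L}^+=\bigcup_{n\ge1}\mathcal{L}(\mathcal{E}^n)$, $\mathcal{L}^*=\{\omega\}\cup\mathcal{L}^+$; $\alpha_{i,j}=\alpha_i\cdots\alpha_j$, $\alpha_{1,0}=\omega$. For $A\subseteq\mathcal{E}^0$ and a word $\beta$ (in particular a letter $b$): $r(A,\beta)=\{r(\lambda):\mathcal{L}(\lambda)=\beta,\ s(\lambda)\in A\}$, $r(A,\omega)=A$, $r(\beta)=r(\mathcal{E}^0,\beta)$. $\mathcal{B}$ accommodating: closed under $r(\cdot,\alpha)$, finite intersections and unions, contains $r(\alpha)$ for $\alpha\in\mathcal{L}^+$; labelled space weakly left resolving if $r(A\cap B,\alpha)=r(A,\alpha)\cap r(B,\alpha)$ for $A,B\in\mathcal{B}$, $\alpha\in\mathcal{L}^+$. $\mathcal{B}_\alpha=\mathcal{B}\cap\mathcal{P}(r(\alpha))$, $\mathcal{B}_\omega=\mathcal{B}$. $S$ = triples $(\alpha,A,\beta)$, $\alpha,\beta\in\mathcal{L}^*$, $\emptyset\ne A\in\mathcal{B}_\alpha\cap\mathcal{B}_\beta$, plus $0$; product $(\alpha,A,\beta)(\gamma,B,\delta)=(\alpha\gamma',r(A,\gamma')\cap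 B,\delta)$ if $\gamma=\beta\gamma'$, $=(\alpha,A\cap r(B,\beta'),\delta\beta')$ if $\beta=\gamma\beta'$, $=0$ otherwise (empty middle entry identified with $0$). $E(S)=\{(\alpha,A,\alpha)\}\cup\{0\}$, $p\le q$ iff $pq=p$. A filter in a poset with least element $0$ is a nonempty upward-closed subset not containing $0$ in which any two elements have a common lower bound in it; an ultrafilter is a maximal filter. A filter $\xi$ in $E(S)$ is of finite type with word $\alpha$ if $\alpha$ is the longest word among the words $\beta$ with $(\beta,B,\beta)\in\xi$; $\xi_n=\{A\in\mathcal{B}:(\alpha_{1,n},A,\alpha_{1,n})\in\xi\}$. For $x\in E(S)$, $Z\subseteq\{y:y\le x\}$ is a cover of $x$ if every nonzero $y\le x$ has $zy\neq0$ for some $z\in Z$; $\xi$ is tight if $Z\cap\xi\neq\emptyset$ for every $x\in\xi$ and every finite cover $Z$ of $x$. For $\alpha\in\mathcal{L}^*$, $X_\alpha$ is the set of ultrafilters in $\mathcal{B}_\alpha$ (under inclusion) and $X_\alpha^{sink}=\{\mathcal{F}\in X_\alpha:\ \forall b\in\mathcal{A}\ \exists A\in\mathcal{F}\text{ with } r(A,b)=\emptyset\}$. For a letter $t$ with $\alpha t\in\mathcal{L}^*$ and $\mathcal{F}\in X_{\alpha t}$, $f_{\alpha[t]}(\mathcal{F})=\{A\in\mathcal{B}_\alpha: r(A,t)\in\mathcal{F}\}$ (an element of $X_\alpha$, or possibly $\emptyset$ when $\alpha=\omega$). Convergence of a net of subsets $\mathcal{F}_\lambda$ of $\mathcal{B}_\alpha$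 to $\mathcal{F}$ means: for each $A\in\mathcal{B}_\alpha$ there is $\lambda_0$ with $A\in\mathcal{F}_\lambda\Leftrightarrow A\in\mathcal{F}$ for all $\lambda\ge\lambda_0$. *)

(* Defs.v *)
From mathcomp Require Import ssreflect ssrfun ssrbool eqtype ssrnat seq choice path.
From Stdlib Require Import ClassicalEpsilon.

(* A directed graph with countable vertex and edge sets, labelled over a
   (countable) alphabet. Nonemptiness of the vertex set and surjectivity of
   the labelling are hypotheses of the main theorem. *)
Record lgraph := LGraph {
  vtx : countType;
  edg : countType;
  alph : countType;
  rng : edg -> vtx;
  src : edg -> vtx;
  lab : edg -> alph
}.
Arguments rng {l}.
Arguments src {l}.
Arguments lab {l}.

Section LS.
Variable G : lgraph.
Local Notation V := (vtx G).
Local Notation E := (edg G).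
Local Notation A := (alph G).

Definition vset := V -> Prop.
Definition word := seq A.

Definition is_path (e : E) (p : seq E) : Prop :=
  path (fun e1 e2 : E => @rng G e1 == @src G e2) e p.

Definition Lplus (w : word) : Prop :=
  exists e p, is_path e p /\ map lab (e :: p) = w.
Definition Lstar (w : word) : Prop := w = [::] \/ Lplus w.

Definition rr (X : vset) (beta : word) : vset :=
  match beta with
  | [::] => X
  | _ :: _ => fun v => exists e p, is_path e p /\ map lab (e :: p) = beta
                        /\ X (src e) /\ rng (last e p) = v
  end.

Definition rw (beta : word) : vset := rr (fun _ => True) beta.

Definition setI (X Y : vset) : vset := fun v => X v /\ Y v.
Definition setU (X Y : vset) : vset := fun v => X v \/ Y v.
Definition setD (X Y : vset) : vset := fun v => X v /\ ~ Y v.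
Definition subs (X Y : vset) : Prop := forall v, X v -> Y v.
Definition nonempty (X : vset) : Prop := exists v, X v.

Variable B : vset -> Prop.

Definition accommodating : Prop :=
  (forall X alpha, B X -> Lstar alpha -> B (rr X alpha)) /\
  (forall X Y, B X -> B Y -> B (setI X Y)) /\
  (forall X Y, B X -> B Y -> B (setU X Y)) /\
  (forall alpha, Lplus alpha -> B (rw alpha)).

Definition weakly_left_resolving : Prop :=
  forall X Y alpha, B X -> B Y -> Lplus alpha ->
    rr (setI X Y) alpha = setI (rr X alpha) (rr Y alpha).

Definition relcomp_closed : Prop :=
  forall X Y, B X -> B Y -> B (setD X Y).

Definition Bsub (alpha : word) (X : vset) : Prop := B X /\ subs X (rw alpha).

(* None is 0; Some (alpha, X, beta) is the triple (alpha, X, beta). *)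
Definition Selt := option (word * vset * word).

Definition Svalid (x : Selt) : Prop :=
  match x with
  | None => True
  | Some (alpha, X, beta) =>
      Lstar alpha /\ Lstar beta /\ Bsub alpha X /\ Bsub beta X /\ nonempty X
  end.

Fixpoint strip (beta gamma : word) : option word :=
  match beta, gamma with
  | [::], _ => Some gamma
  | b :: beta', c :: gamma' => if b == c then strip beta' gamma' else None
  | _ :: _, [::] => None
  end.

(* triples with empty middle entry are identified with 0 *)
Definition mkS (alpha : word) (X : vset) (beta : word) : Selt :=
  if excluded_middle_informative (nonempty X) then Some (alpha, X, beta) else None.

Definition Smul (x y : Selt) : Selt :=
  match x, y with
  | Some (alpha, X, beta), Some (gamma, Y, delta) =>
      match strip beta gamma with
      | Some g' => mkS (alpha ++ g') (setI (rr X g') Y) delta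
      | None =>
          match strip gamma beta with
          | Some b' => mkS alpha (setI X (rr Y b')) (delta ++ b')
          | None => None
          end
      end
  | _, _ => None
  end.

Definition isE (x : Selt) : Prop :=
  x = None \/ (exists alpha X, x = Some (alpha, X, alpha) /\ Svalid x).

Definition Sle (p q : Selt) : Prop := Smul p q = p.

End LS.
Arguments is_path {G}.
Arguments Lplus {G}.
Arguments Lstar {G}.
Arguments rr {G}.
Arguments rw {G}.
Arguments setI {G}.
Arguments setU {G}.
Arguments setD {G}.
Arguments subs {G}.
Arguments nonempty {G}.
Arguments accommodating {G}.
Arguments weakly_left_resolving {G}.
Arguments relcomp_closed {G}.
Arguments Bsub {G}.
Arguments Svalid {G}.
Arguments strip {G}.
Arguments mkS {G}.
Arguments Smul {G}.
Arguments isE {G}.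
Arguments Sle {G}.

Section Filters.
Variable T : Type.
Variable P : T -> Prop.
Variable le : T -> T -> Prop.
Variable isbot : T -> Prop.

Definition is_filter (F : T -> Prop) : Prop :=
  (forall x, F x -> P x) /\
  (exists x, F x) /\
  (forall x y, F x -> P y -> le x y -> F y) /\
  (forall x, F x -> ~ isbot x) /\
  (forall x y, F x -> F y -> exists z, F z /\ le z x /\ le z y).

Definition is_ultrafilter (F : T -> Prop) : Prop :=
  is_filter F /\
  (forall F', is_filter F' -> (forall x, F x -> F' x) -> forall x, F' x -> F x).
End Filters.
Arguments is_filter {T}.
Arguments is_ultrafilter {T}.

Definition directed (L : Type) (le : L -> L -> Prop) : Prop :=
  (exists l : L, True) /\
  (forall l, le l l) /\
  (forall l1 l2 l3, le l1 l2 -> le l2 l3 -> le l1 l3) /\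
  (forall l1 l2, exists l3, le l1 l3 /\ le l2 l3).
Arguments directed {L}.

Section Main.
Variable G : lgraph.
Local Notation V := (vtx G).
Local Notation A := (alph G).
Variable B : vset G -> Prop.

Definition ES_filter (xi : Selt G -> Prop) : Prop :=
  is_filter (isE B) (@Sle G) (fun x => x = None) xi.

Definition finite_type (xi : Selt G -> Prop) (alpha : word G) : Prop :=
  (exists X, xi (Some (alpha, X, alpha))) /\
  (forall beta X, xi (Some (beta, X, beta)) -> size beta <= size alpha).

Definition xi_n (xi : Selt G -> Prop) (alpha : word G) (n : nat) : vset G -> Prop :=
  fun X => B X /\ xi (Some (take n alpha, X, take n alpha)).

Definition is_cover (x : Selt G) (Z : seq (Selt G)) : Prop :=
  (forall z, List.In z Z -> isE B z /\ Sle z x) /\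
  (forall y, isE B y -> y <> None -> Sle y x ->
     exists z, List.In z Z /\ Smul z y <> None).

Definition tight (xi : Selt G -> Prop) : Prop :=
  forall x (Z : seq (Selt G)), xi x -> is_cover x Z ->
    exists z, List.In z Z /\ xi z.

Definition X_ (alpha : word G) (F : vset G -> Prop) : Prop :=
  is_ultrafilter (Bsub B alpha) (@subs G) (fun X => ~ nonempty X) F.

Definition X_sink (alpha : word G) (F : vset G -> Prop) : Prop :=
  X_ alpha F /\
  forall b : A, exists X, F X /\ forall v, ~ rr X [:: b] v.

Definition f_at (alpha : word G) (t : A) (F : vset G -> Prop) : vset G -> Prop :=
  fun X => Bsub B alpha X /\ F (rr X [:: t]).

Definition converges (alpha : word G) (L : Type) (le : L -> L -> Prop)
    (Fn : L -> vset G -> Prop) (F : vset G -> Prop) : Prop :=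
  forall X, Bsub B alpha X ->
    exists l0, forall l, le l0 l -> (Fn l X <-> F X).

End Main.
Arguments ES_filter {G}.
Arguments finite_type {G}.
Arguments xi_n {G}.
Arguments is_cover {G}.
Arguments tight {G}.
Arguments X_ {G}.
Arguments X_sink {G}.
Arguments f_at {G}.
Arguments converges {G} B alpha {L}.
Arguments finite_type {G} xi alpha.

(* Main.v *)
Require Import Defs.
From mathcomp Require Import ssreflect ssrfun ssrbool eqtype ssrnat seq choice path.
From Stdlib Require Import Classical FunctionalExtensionality PropExtensionality ClassicalEpsilon.
From mathcomp Require boolp classical_sets.

Set Implicit Arguments.
Unset Strict Implicit.

Section Basic.
Variable G : lgraph.
Local Notation V := (vtx G).
Local Notation A := (alph G).

Lemma vext (X Y : vset G) : (forall v, X v <-> Y v) -> X = Y.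
Proof.
move=> H; apply: functional_extensionality => v; apply: propositional_extensionality; exact: H.
Qed.

Lemma cat_injl (T : Type) (s a b : seq T) : s ++ a = s ++ b -> a = b.
Proof. by elim: s => //= x s IH [] /IH. Qed.

Lemma strip_cat (b d : word G) : strip b (b ++ d) = Some d.
Proof. by elim: b => //= x b IH; rewrite eqxx. Qed.

Lemma strip_Some (b g d : word G) : strip b g = Some d -> g = b ++ d.
Proof.
elim: b g => [|x b IH] [|y g] //=; first by case=> ->.
  by case=> ->.
by case: eqP => // -> /IH ->.
Qed.

Lemma strip_None (b g : word G) : strip b g = None -> forall d, g <> b ++ d.
Proof. by move=> H d E; move: H; rewrite E strip_cat. Qed.

Lemma mkS_ne (a b : word G) X : nonempty X -> mkS a X b = Some (a, X, b).
Proof. by rewrite /mkS; case: excluded_middle_informative. Qed.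

Lemma mkS_e (a b : word G) X : ~ nonempty X -> mkS a X b = None.
Proof. by rewrite /mkS; case: excluded_middle_informative. Qed.

Lemma mkS_None (a b : word G) X : mkS a X b = None -> ~ nonempty X.
Proof. by move=> H Hn; rewrite mkS_ne in H. Qed.

Lemma rr_nil (X : vset G) : rr X [::] = X.
Proof. by []. Qed.

Lemma rr_mono (X Y : vset G) w : subs X Y -> subs (rr X w) (rr Y w).
Proof.
case: w => [|a w] H v //=; first exact: H.
move=> [e [p [H1 [H2 [H3 H4]]]]]; exists e, p; split=> //; split=> //; split=> //; exact: H.
Qed.

Lemma rr_src (X : vset G) w : nonempty (rr X w) -> nonempty X.
Proof.
case: w => [|a w] //= [v [e [p [_ [_ [H _]]]]]]; by exists (src e).
Qed.

Lemma rr_Lplus (X : vset G) w : w <> [::] -> nonempty (rr X w) -> Lplus w.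
Proof.
case: w => [|a w] // _ [v [e [p [H1 [H2 _]]]]]; by exists e, p.
Qed.

Lemma rr_comp (X : vset G) u w : rr (rr X u) w = rr X (u ++ w).
Proof.
case: u => [|a u]; first by [].
case: w => [|b w]; first by rewrite cats0.
apply: vext => v; split.
- move=> [e' [p' [H1 [H2 [[e [p [K1 [K2 [K3 K4]]]]] H4]]]]].
  exists e, (p ++ e' :: p'); split.
    rewrite /is_path cat_path K1 /= -K4 eqxx. exact: H1.
  split; first by rewrite -K2 -H2 /= map_cat.
  split=> //. by rewrite last_cat /=.
- move=> [e [q [H1 [H2 [H3 H4]]]]].
  move: H2 => /= [Hl Hq].
  set n := size u.
  have Hs : size (map lab q) = n + (size (b :: w)) by rewrite Hq size_cat.
  rewrite size_map in Hs.
  have Hd : drop n q <> [::].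
    move=> E; have := size_drop n q; rewrite E Hs /= => H0; move: H0; rewrite -addnBAC // subnn. by [].
  case Ed : (drop n q) Hd => [|e' p'] // _.
  have Eq : q = take n q ++ e' :: p' by rewrite -Ed cat_take_drop.
  have Hmt : map lab (take n q) = u by rewrite map_take Hq take_size_cat.
  have Hmd : map lab (e' :: p') = b :: w by rewrite -Ed map_drop Hq drop_size_cat.
  move: H1; rewrite /is_path Eq cat_path => /andP [P1 /= /andP [/eqP P2 P3]].
  exists e', p'; split; first exact: P3.
  split; first exact: Hmd.
  split; last by rewrite Eq last_cat /= in H4.
  exists e, (take n q); split; first exact: P1.
  split; first by rewrite /= Hl Hmt.
  by split.
Qed.

Lemma rr_first (X : vset G) b w : nonempty (rr X (b :: w)) -> nonempty (rr X [:: b]).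
Proof. by rewrite -[b :: w]/([:: b] ++ w) -rr_comp => /rr_src. Qed.

Lemma rr_empty (X : vset G) w : ~ nonempty X -> ~ nonempty (rr X w).
Proof. by move=> H /rr_src. Qed.

Lemma rr_split (X Y : vset G) d v : rr X d v -> rr (setI X Y) d v \/ rr (setD X Y) d v.
Proof.
case: d => [|a d] /=.
  by move=> H; case: (classic (Y v)) => K; [left|right].
move=> [e [p [H1 [H2 [H3 H4]]]]]; case: (classic (Y (src e))) => K.
  by left; exists e, p.
by right; exists e, p.
Qed.

End Basic.

Section Sg.
Variable G : lgraph.
Variable B : vset G -> Prop.
Hypothesis Hacc : accommodating B.
Hypothesis Hwlr : weakly_left_resolving B.
Hypothesis Hrc : relcomp_closed B.

Definition idem (g : word G) (W : vset G) : Selt G := Some (g, W, g).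

Lemma B_setI X Y : B X -> B Y -> B (setI X Y).
Proof. by case: Hacc => _ [H _] ; apply: H. Qed.

Lemma B_rr X w : B X -> B (rr X w).
Proof.
move=> HX; case: w => [|a w] //.
case: (classic (Lplus (a :: w))) => HL.
  by case: Hacc => H _; apply: H => //; right.
have -> : rr X (a :: w) = setD X X.
  apply: vext => v; split; last by case.
  by move=> Hv; exfalso; apply: HL; apply: (@rr_Lplus _ X) => //; exists v.
exact: Hrc.
Qed.

Lemma rr_disj X Y w : B X -> B Y -> ~ nonempty (setI X Y) ->
  ~ nonempty (setI (rr X w) (rr Y w)).
Proof.
move=> HX HY HXY; case: w => [|a w] //.
case: (classic (Lplus (a :: w))) => HL.
  rewrite -Hwlr //; exact: rr_empty.
move=> [v [Hv _]]; apply: HL; apply: (@rr_Lplus _ X) => //; by exists v.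
Qed.

Lemma Bsub_rr a X w : Bsub B a X -> Bsub B (a ++ w) (rr X w).
Proof.
move=> [HB Hs]; split; first exact: B_rr.
rewrite /rw -rr_comp; exact: rr_mono.
Qed.

Lemma strip_size (b g d : word G) : strip b g = Some d -> size b <= size g.
Proof. by move/strip_Some => ->; rewrite size_cat leq_addr. Qed.

Lemma Sle1 a d W X : Smul (idem (a ++ d) W) (idem a X) = mkS (a ++ d) (setI W (rr X d)) (a ++ d).
Proof.
rewrite /Smul /idem.
case: d => [|c d].
  by rewrite !cats0 -{2}[a]cats0 strip_cat cats0.
case E : (strip (a ++ c :: d) a) => [d'|].
  move/strip_size: E; rewrite size_cat /= => H.
  by exfalso; move: H; rewrite -{2}[size a]addn0 leq_add2l.
by rewrite strip_cat.
Qed.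

Lemma Sle2 a d W X : Smul (idem a X) (idem (a ++ d) W) = mkS (a ++ d) (setI (rr X d) W) (a ++ d).
Proof. by rewrite /Smul /idem strip_cat. Qed.

Lemma Sinc g a W X : (forall d, g <> a ++ d) -> (forall d, a <> g ++ d) ->
  Smul (idem g W) (idem a X) = None.
Proof.
move=> H1 H2; rewrite /Smul /idem.
case E : (strip g a) => [d|]; first by exfalso; apply: (H2 d); exact: strip_Some.
case E' : (strip a g) => [d|] //; by exfalso; apply: (H1 d); exact: strip_Some.
Qed.

Lemma Sle_char g W a X : nonempty W -> Sle (idem g W) (idem a X) ->
  exists d, g = a ++ d /\ subs W (rr X d).
Proof.
move=> HW; rewrite /Sle.
case E : (strip a g) => [d|].
  move/strip_Some: E => E; subst g; rewrite Sle1 => H; exists d; split => //.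
  case: (classic (nonempty (setI W (rr X d)))) => K.
    move: H; rewrite mkS_ne //; case=> <- v; by case.
  by move: H; rewrite mkS_e.
case E' : (strip g a) => [d|].
  move/strip_Some: E' => E'; subst a; rewrite Sle2.
  case: (classic (nonempty (setI (rr W d) X))) => K; last by rewrite mkS_e.
  rewrite mkS_ne //; case=> H _ _.
  have Hd : d = [::] by apply/eqP; rewrite -size_eq0; move/(f_equal size): H; rewrite size_cat => /eqP; rewrite -{2}[size g]addn0 eqn_add2l.
  by subst d; move: E; rewrite cats0 -{2}[g]cats0 strip_cat.
rewrite Sinc //.
  by move=> d Hd; move: E; rewrite Hd strip_cat.
by move=> d Hd; move: E'; rewrite Hd strip_cat.
Qed.

Lemma Sle_of g W a X d : nonempty W -> g = a ++ d -> subs W (rr X d) ->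
  Sle (idem g W) (idem a X).
Proof.
move=> HW -> Hs; rewrite /Sle Sle1.
have -> : setI W (rr X d) = W by apply: vext => v; split; [case|move=> Hv; split=> //; exact: Hs].
by rewrite mkS_ne.
Qed.

Lemma isE_idem g W : Lstar g -> Bsub B g W -> nonempty W -> isE B (idem g W).
Proof. move=> H1 H2 H3; right; exists g, W; split=> //; by do 4 (split=> //). Qed.

Definition fil (b : word G) (F : vset G -> Prop) :=
  is_filter (Bsub B b) (@subs G) (fun X => ~ nonempty X) F.

Lemma uf_sep b F Y : X_ B b F -> Bsub B b Y -> ~ F Y ->
  exists D, F D /\ ~ nonempty (setI D Y).
Proof.
move=> [[Hc [Hn [Hu [Hb Hm]]]] Hmax] HY HnY.
apply: NNPP => Hno.
have Hall : forall D, F D -> nonempty (setI D Y).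
  by move=> D HD; apply: NNPP => K; apply: Hno; exists D.
pose F' := fun Z => Bsub B b Z /\ exists D, F D /\ subs (setI D Y) Z.
have HF' : fil b F'.
  rewrite /fil /is_filter; split; first by move=> x [].
  split.
    case: Hn => D HD; exists Y; split=> //; exists D; split=> // v [? ?] //.
  split.
    move=> x y [_ [D [HD Hs]]] Hy Hxy; split=> //; exists D; split=> // v Hv; apply: Hxy; exact: Hs.
  split.
    move=> x [_ [D [HD Hs]]] Hne; apply: Hne; case: (Hall D HD) => v Hv; exists v; exact: Hs.
  move=> x y [_ [D1 [H1 S1]]] [_ [D2 [H2 S2]]].
  case: (Hm D1 D2 H1 H2) => D3 [H3 [T1 T2]].
  case: (Hc D3 H3) => BD3 SD3.
  exists (setI D3 Y); split.
    split; first (split; first (apply: B_setI => //; by case: HY)).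
      by move=> v [Hv _]; apply: SD3.
    by exists D3; split.
  split.
    by move=> v [Hv1 Hv2]; apply: S1; split=> //; apply: T1.
  by move=> v [Hv1 Hv2]; apply: S2; split=> //; apply: T2.
apply: HnY; apply: (Hmax F' HF').
  move=> x Hx; split; first exact: Hc.
  by exists x; split => // v [? ?] //.
split => //; case: Hn => D HD; exists D; split=> // v [? ?] //.
Qed.

Lemma UL b W : Bsub B b W -> nonempty W -> exists F, X_ B b F /\ F W.
Proof.
move=> HW HWn.
pose T := {F : vset G -> Prop | fil b F /\ F W}.
pose P0 := fun Z => Bsub B b Z /\ subs W Z.
have HP0 : fil b P0 /\ P0 W.
  split; last by split.
  rewrite /fil /is_filter; split; first by move=> x [].
  split; first by exists W; split.
  split; first by move=> x y [_ Hx] Hy Hxy; split=> // v /Hx /Hxy.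
  split; first by move=> x [_ Hx] K; apply: K; case: HWn => v Hv; exists v; exact: Hx.
  move=> x y [_ Hx] [_ Hy]; exists W; split; first by split.
  by split.
pose t0 : T := exist _ P0 HP0.
pose R := fun s t : T => boolp.asbool (forall Z, sval s Z -> sval t Z).
have [t Ht] : exists t, classical_sets.premaximal (fun x y => R x y) t.
  apply: (@classical_sets.ZL_preorder T t0 R).
  - by move=> t; apply/boolp.asboolP.
  - by move=> r s t /boolp.asboolP H1 /boolp.asboolP H2; apply/boolp.asboolP => Z /H1 /H2.
  move=> Ach Htot.
  case: (classic (exists s, Ach s)) => [[s0 Hs0]|Hno]; last first.
    by exists t0 => s Hs; exfalso; apply: Hno; exists s.
  pose U := fun Z => exists s, Ach s /\ sval s Z.
  have HU : fil b U /\ U W.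
    split; last by exists s0; split=> //; case: (svalP s0).
    rewrite /fil /is_filter; split.
      by move=> x [s [_ Hx]]; case: (svalP s) => [[Hc _] _]; apply: Hc.
    split; first by exists W, s0; split=> //; case: (svalP s0).
    split.
      move=> x y [s [Hs Hx]] Hy Hxy; exists s; split=> //.
      by case: (svalP s) => [[_ [_ [Hu _]]] _]; apply: (Hu x).
    split.
      by move=> x [s [_ Hx]]; case: (svalP s) => [[_ [_ [_ [Hbt _]]]] _]; apply: Hbt.
    move=> x y [s1 [H1 X1]] [s2 [H2 X2]].
    have : exists s, Ach s /\ sval s x /\ sval s y.
      case: (Htot s1 s2 H1 H2) => /boolp.asboolP K; [exists s2 | exists s1]; split=> //; split; by auto.
    move=> [s [Hs [Hx Hy]]].
    case: (svalP s) => [[_ [_ [_ [_ Hm]]]] _].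
    case: (Hm x y Hx Hy) => z [Hz [Z1 Z2]]; exists z; split=> //; by exists s.
  exists (exist _ U HU) => s Hs; apply/boolp.asboolP => Z HZ; by exists s.
exists (sval t); split; last by case: (svalP t).
split; first by case: (svalP t).
move=> F' HF' Hsub x Hx.
have HW' : F' W by apply: Hsub; case: (svalP t).
pose s : T := exist _ F' (conj HF' HW').
have : R t s by apply/boolp.asboolP.
by move/Ht/boolp.asboolP; apply.
Qed.


Variable xi : Selt G -> Prop.
Variable alpha : word G.
Hypothesis Hxi : ES_filter B xi.
Hypothesis Hft : finite_type xi alpha.

Local Notation F := (xi_n B xi alpha (size alpha)).

Lemma Hxi' : (forall x, xi x -> isE B x) /\ (exists x, xi x) /\ (forall x y, xi x -> isE B y -> Sle x y -> xi y) /\ (forall x, xi x -> ~ x = None) /\ (forall x y, xi x -> xi y -> exists z, xi z /\ Sle z x /\ Sle z y).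
Proof. exact: Hxi. Qed.

Lemma Hft' : (exists X, xi (Some (alpha, X, alpha))) /\ (forall beta X, xi (Some (beta, X, beta)) -> size beta <= size alpha).
Proof. exact: Hft. Qed.


Lemma F_def X : F X <-> B X /\ xi (idem alpha X).
Proof. by rewrite /xi_n take_size. Qed.

Lemma xi_form x : xi x -> exists g W, x = idem g W /\ Lstar g /\ Bsub B g W /\ nonempty W.
Proof.
case: Hxi' => [Hc [_ [_ [Hb _]]]] Hx.
have : isE B x := Hc x Hx; rewrite /isE /Svalid; case=> [E|[g [W [E HS]]]]; first by exfalso; apply: (Hb x).
subst x; case: HS => H1 [_ [H3 [_ H5]]].
by exists g, W.
Qed.

Lemma xi_up x y : xi x -> isE B y -> Sle x y -> xi y.
Proof. case: Hxi' => [_ [_ [Hu _]]]; exact: Hu. Qed.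

Lemma xi_meet x y : xi x -> xi y -> exists z, xi z /\ Sle z x /\ Sle z y.
Proof. case: Hxi' => [_ [_ [_ [_ Hm]]]]; exact: Hm. Qed.

Lemma xi_size g W : xi (idem g W) -> size g <= size alpha.
Proof. case: Hft' => _ H; exact: H. Qed.

Lemma idem_inj g W g' W' : idem g W = idem g' W' -> g = g' /\ W = W'.
Proof. by case. Qed.

Lemma xi_pre g W : xi (idem g W) -> exists d C, alpha = g ++ d /\ F C /\ subs C (rr W d).
Proof.
move=> Hx; case: Hft' => [[Y HY] _].
case: (xi_meet Hx HY) => z [Hz [Z1 Z2]].
case: (xi_form Hz) => gz [Wz [Ez [HL [HB Hne]]]]; subst z.
case: (Sle_char Hne Z2) => d1 [E1 _].
have Hd1 : d1 = [::].
  apply/eqP; rewrite -size_eq0; have := xi_size Hz; rewrite E1 size_cat => H.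
  by rewrite -leqn0 -(leq_add2l (size alpha)) addn0.
subst d1; rewrite cats0 in E1; subst gz.
case: (Sle_char Hne Z1) => d [E2 S2].
exists d, Wz; split=> //; split=> //; apply/F_def; split=> //; by case: HB.
Qed.

Lemma F_B X : F X -> Bsub B alpha X /\ nonempty X /\ Lstar alpha.
Proof.
move/F_def=> [_ Hx]; case: (xi_form Hx) => g [W [E [H1 [H2 H3]]]].
by case: (idem_inj E) => -> ->.
Qed.

Lemma F_up X Y : F X -> Bsub B alpha Y -> subs X Y -> F Y.
Proof.
move=> HX HY HXY; case: (F_B HX) => [HB [Hn HL]].
apply/F_def; split; first by case: HY.
have Hx := proj2 (proj1 (F_def X) HX).
apply: (xi_up Hx).
  apply: isE_idem => //; case: Hn => v Hv; exists v; exact: HXY.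
apply: (@Sle_of _ _ _ _ [::]) => //; by rewrite cats0.
Qed.

Lemma F_meet X Y : F X -> F Y -> exists W, F W /\ subs W X /\ subs W Y.
Proof.
move=> /F_def [_ HX] /F_def [_ HY].
case: (xi_meet HX HY) => z [Hz [Z1 Z2]].
case: (xi_form Hz) => gz [Wz [Ez [HL [HB Hne]]]]; subst z.
case: (Sle_char Hne Z1) => d1 [E1 S1].
have Hd1 : d1 = [::].
  apply/eqP; rewrite -size_eq0; have := xi_size Hz; rewrite E1 size_cat => H.
  by rewrite -leqn0 -(leq_add2l (size alpha)) addn0.
subst d1; rewrite cats0 in E1; subst gz.
case: (Sle_char Hne Z2) => d2 [E2 S2].
have Hd2 : d2 = [::] by apply: (@cat_injl _ alpha); rewrite cats0.
subst d2.
exists Wz; split; last by split.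
apply/F_def; split=> //; by case: HB.
Qed.

Lemma F_ex : exists X, F X.
Proof.
case: Hft' => [[Y HY] _]; exists Y; apply/F_def; split=> //.
case: (xi_form HY) => g [W [E [_ [[HB _] _]]]]; by case: (idem_inj E) => _ ->.
Qed.

Lemma xi_of_F g W d C : Lstar g -> Bsub B g W -> alpha = g ++ d -> F C ->
  subs C (rr W d) -> xi (idem g W).
Proof.
move=> HL HB E HC HCs.
have HW : nonempty W.
  apply: (@rr_src _ _ d); case: (F_B HC) => [_ [[v Hv] _]]; exists v; exact: HCs.
apply: (xi_up (proj2 (proj1 (F_def C) HC))); first exact: isE_idem.
exact: (@Sle_of _ _ _ _ d (proj1 (proj2 (F_B HC)))).
Qed.


Lemma isE_some y : isE B y -> y <> None ->
  exists g W, y = idem g W /\ Lstar g /\ Bsub B g W /\ nonempty W.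
Proof.
rewrite /isE; case=> [E|[g [W [E HS]]]] Hn; first by [].
subst y; case: HS => H1 [_ [H3 [_ H5]]]; by exists g, W.
Qed.

Lemma mk_le g a d W X : g = a ++ d -> (nonempty W -> Lstar g) -> Bsub B g W -> subs W (rr X d) ->
  isE B (mkS g W g) /\ Sle (mkS g W g) (idem a X).
Proof.
move=> E HL HB Hs; case: (classic (nonempty W)) => K.
  rewrite mkS_ne //; split; [exact: isE_idem (HL K) HB K | exact: (Sle_of K E Hs)].
by rewrite mkS_e //; split; [left|].
Qed.

Lemma Smul_ne (g g' : word G) (W W' : vset G) : nonempty (setI W W') -> mkS g (setI W W') g' <> None.
Proof. by move=> H; rewrite mkS_ne. Qed.

Lemma tight_uf : tight B xi -> X_ B alpha F.
Proof.
move=> Ht.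
have HF : fil alpha F.
  rewrite /fil /is_filter; split; first by move=> X /F_B [].
  split; first exact: F_ex.
  split; first by move=> X Y HX HY HXY; apply: (F_up HX).
  split; first by move=> X /F_B [_ [Hn _]].
  exact: F_meet.
split=> // F' HF' Hsub Y HY.
case: F_ex => X HX.
have [[BX SX] [HXn HL]] := F_B HX.
have HYB : Bsub B alpha Y by case: HF' => Hc _; apply: Hc.
pose z1 := mkS alpha (setI X Y) alpha.
pose z2 := mkS alpha (setD X Y) alpha.
have Hcov : is_cover B (idem alpha X) [:: z1; z2].
  split.
    move=> z /= [<-|[<-|//]].
      apply: (@mk_le _ _ [::]) => //; first by rewrite cats0.
        split; first by apply: B_setI => //; case: HYB.
        by move=> v [Hv _]; apply: SX.
      by move=> v [].
    apply: (@mk_le _ _ [::]) => //; first by rewrite cats0.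
      split; first by apply: Hrc => //; case: HYB.
      by move=> v [Hv _]; apply: SX.
    by move=> v [].
  move=> y Hy Hyn Hle.
  case: (isE_some Hy Hyn) => g [W [Ey [_ [_ [v Hv]]]]]; subst y.
  case: (Sle_char (ex_intro _ v Hv) Hle) => d [Eg Hs]; subst g.
  case: (rr_split Y (Hs v Hv)) => K.
    exists z1; split; first by left.
    rewrite /z1 mkS_ne; last by apply: (@rr_src _ _ d); exists v.
    rewrite Sle2; apply: Smul_ne; by exists v.
  exists z2; split; first by right; left.
  rewrite /z2 mkS_ne; last by apply: (@rr_src _ _ d); exists v.
  rewrite Sle2; apply: Smul_ne; by exists v.
case: (Ht _ _ (proj2 (proj1 (F_def X) HX)) Hcov) => z [Hz Hxz].
case: Hxi' => [_ [_ [_ [Hbot _]]]].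
move: Hz => /= [Ez|[Ez|//]]; subst z.
  have Hn : nonempty (setI X Y) by apply: NNPP => K; apply: (Hbot _ Hxz); rewrite /z1 mkS_e.
  rewrite /z1 mkS_ne // in Hxz.
  apply: (@F_up (setI X Y)) => //; last by move=> v [].
  apply/F_def; split=> //; apply: B_setI => //; by case: HYB.
have Hn : nonempty (setD X Y) by apply: NNPP => K; apply: (Hbot _ Hxz); rewrite /z2 mkS_e.
rewrite /z2 mkS_ne // in Hxz.
have HD : F' (setD X Y).
  apply: Hsub; apply/F_def; split=> //; apply: Hrc => //; by case: HYB.
case: HF' => _ [_ [_ [Hb Hm]]].
case: (Hm _ _ HD HY) => w [Hw [W1 W2]].
exfalso; apply: (Hb w Hw) => [[u Hu]].
by case: (W1 u Hu) => _; apply; apply: W2.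
Qed.

Lemma uf_fil b Gf : X_ B b Gf -> (forall X, Gf X -> Bsub B b X) /\ (exists X, Gf X) /\
  (forall X Y, Gf X -> Bsub B b Y -> subs X Y -> Gf Y) /\ (forall X, Gf X -> ~ ~ nonempty X) /\
  (forall X Y, Gf X -> Gf Y -> exists Z, Gf Z /\ subs Z X /\ subs Z Y).
Proof. by case. Qed.

Lemma uf_up b Gf X Y : X_ B b Gf -> Gf X -> Bsub B b Y -> subs X Y -> Gf Y.
Proof. move/uf_fil => [_ [_ [H _]]]; exact: H. Qed.

Lemma uf_ne b Gf X : X_ B b Gf -> Gf X -> nonempty X.
Proof. move/uf_fil => [_ [_ [_ [H _]]]] HX; apply: NNPP; exact: H. Qed.

Lemma uf_car b Gf X : X_ B b Gf -> Gf X -> Bsub B b X.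
Proof. move/uf_fil => [H _]; exact: H. Qed.

Lemma uf_disj b Gf X Y : X_ B b Gf -> Gf X -> Gf Y -> nonempty (setI X Y).
Proof.
move=> HG HX HY; have := HG; move/uf_fil => [_ [_ [_ [_ Hm]]]].
case: (Hm X Y HX HY) => Z [HZ [Z1 Z2]].
case: (uf_ne HG HZ) => v Hv; exists v; split; [exact: Z1|exact: Z2].
Qed.

Lemma uf_meet b Gf X Y : X_ B b Gf -> Gf X -> Gf Y -> exists Z, Gf Z /\ subs Z X /\ subs Z Y.
Proof. move/uf_fil => [_ [_ [_ [_ Hm]]]]; exact: Hm. Qed.

Lemma conv_lemma (L : Type) (le : L -> L -> Prop) (Phi : L -> vset G -> Prop) :
  X_ B alpha F ->
  (forall l X Y, Phi l X -> Bsub B alpha Y -> subs X Y -> Phi l Y) ->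
  (forall l X Y, Phi l X -> Phi l Y -> nonempty (setI X Y)) ->
  (forall X, F X -> exists l0, forall l, le l0 l -> Phi l X) ->
  converges B alpha le Phi F.
Proof.
move=> Huf Hup Hdj Hev X HX.
case: (classic (F X)) => K.
  case: (Hev X K) => l0 Hl0; exists l0 => l Hl; split=> // _; exact: Hl0.
case: (uf_sep Huf HX K) => D [HD HDX].
case: (Hev D HD) => l0 Hl0; exists l0 => l Hl; split=> // HP.
by exfalso; apply: HDX; apply: (Hdj l); [apply: Hl0|].
Qed.

Lemma net_a : X_ B alpha F ->
  (forall X, F X -> exists Gf, X_sink B alpha Gf /\ Gf X) ->
  exists (L : Type) (le : L -> L -> Prop) (Fn : L -> vset G -> Prop),
       directed le /\ (forall l, X_sink B alpha (Fn l)) /\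
       converges B alpha le Fn F.
Proof.
move=> Huf H.
pose L := {X : vset G | F X}.
pose le := fun l1 l2 : L => subs (sval l2) (sval l1).
pose c := fun l : L => constructive_indefinite_description _ (H (sval l) (svalP l)).
exists L, le, (fun l => sval (c l)).
have Hc : forall l, X_sink B alpha (sval (c l)) /\ sval (c l) (sval l) := fun l => svalP (c l).
split.
  split; first by case: F_ex => X HX; exists (exist _ X HX).
  split; first by move=> l v.
  split; first by move=> l1 l2 l3 H1 H2 v /H2 /H1.
  move=> l1 l2; case: (F_meet (svalP l1) (svalP l2)) => W [HW [W1 W2]].
  by exists (exist _ W HW).
split; first by move=> l; case: (Hc l).
apply: conv_lemma => //.
- move=> l X Y HX HY HXY; case: (Hc l) => [[HG _] _]; exact: uf_up HG HX HY HXY.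
- move=> l X Y HX HY; case: (Hc l) => [[HG _] _]; exact: uf_disj HG HX HY.
move=> X HX; exists (exist _ X HX) => l Hl.
case: (Hc l) => [[HG _] Hl'].
apply: (uf_up HG Hl') => //; by case: (F_B HX).
Qed.

Lemma net_b : X_ B alpha F ->
  (forall X, F X -> forall s : seq (alph G), exists t, t \notin s /\
     exists Gf, X_ B (alpha ++ [:: t]) Gf /\ Gf (rr X [:: t])) ->
  exists (L : Type) (le : L -> L -> Prop) (t : L -> alph G)
            (Fn : L -> vset G -> Prop),
       directed le /\
       (forall l, X_ B (alpha ++ [:: t l]) (Fn l)) /\
       converges B alpha le (fun l => f_at B alpha (t l) (Fn l)) F /\
       (forall b : alph G, exists lb, forall l, le lb l -> t l <> b).
Proof.
move=> Huf H.
pose L := {p : vset G * seq (alph G) | F p.1}.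
pose le := fun l1 l2 : L => subs (sval l2).1 (sval l1).1 /\ {subset (sval l1).2 <= (sval l2).2}.
pose c := fun l : L => constructive_indefinite_description _ (H _ (svalP l) (sval l).2).
pose tt := fun l => sval (c l).
pose c2 := fun l : L => constructive_indefinite_description _ (proj2 (svalP (c l))).
exists L, le, tt, (fun l => sval (c2 l)).
have Ht : forall l, tt l \notin (sval l).2 := fun l => proj1 (svalP (c l)).
have Hc : forall l, X_ B (alpha ++ [:: tt l]) (sval (c2 l)) /\ sval (c2 l) (rr (sval l).1 [:: tt l])
  := fun l => svalP (c2 l).
case: F_ex => X0 HX0.
split.
  split; first by exists (exist (fun p : vset G * seq (alph G) => F p.1) (X0, [::]) HX0).
  split; first by move=> l; split.
  split; first by move=> l1 l2 l3 [H1 K1] [H2 K2]; split; [move=> v /H2 /H1|move=> x /K1 /K2].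
  move=> l1 l2; case: (F_meet (svalP l1) (svalP l2)) => W [HW [W1 W2]].
  exists (exist (fun p : vset G * seq (alph G) => F p.1) (W, (sval l1).2 ++ (sval l2).2) HW).
  split; split=> //= x Hx; rewrite mem_cat Hx ?orbT //.
split; first by move=> l; case: (Hc l).
split.
  apply: conv_lemma => //.
  - move=> l X Y [HX1 HX2] HY HXY; split=> //.
    case: (Hc l) => HG _; apply: (uf_up HG HX2); first exact: Bsub_rr.
    exact: rr_mono.
  - move=> l X Y [HX1 HX2] [HY1 HY2]; case: (Hc l) => HG _.
    apply: NNPP => K; apply: (@rr_disj X Y [:: tt l]); [by case: HX1|by case: HY1|exact: K|].
    exact: uf_disj HG HX2 HY2.
  move=> X HX.
  exists (exist (fun p : vset G * seq (alph G) => F p.1) (X, [::]) HX) => l [Hl _].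
  case: (Hc l) => HG Hl'; split; first by case: (F_B HX).
  apply: (uf_up HG Hl'); first by apply: Bsub_rr; case: (F_B HX).
  by apply: rr_mono.
move=> b; exists (exist (fun p : vset G * seq (alph G) => F p.1) (X0, [:: b]) HX0) => l [_ Hl] E.
have := Ht l; rewrite E; move/negP; apply; apply: Hl; by rewrite inE.
Qed.

Lemma mem_In (T : eqType) (x : T) (s : seq T) : x \in s -> List.In x s.
Proof.
elim: s => //= y s IH; rewrite inE => /orP [/eqP ->|/IH]; by [left|right].
Qed.

Lemma no_sink_claim (Ht : tight B xi) (A0 : vset G) :
  F A0 -> ~ (exists Gf, X_sink B alpha Gf /\ Gf A0) ->
  forall W, F W -> subs W A0 -> forall s : seq (alph G),
    exists t, t \notin s /\ nonempty (rr W [:: t]).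
Proof.
move=> HA0 Hno W HW HWA s.
apply: NNPP => Hn.
have Hn' : forall t, t \notin s -> ~ nonempty (rr W [:: t]).
  by move=> t Ht' K; apply: Hn; exists t.
have [[BW SW] [HWn HL]] := F_B HW.
pose f := fun b => mkS (alpha ++ [:: b]) (rr W [:: b]) (alpha ++ [:: b]).
have Hcov : is_cover B (idem alpha W) (map f s).
  split.
    move=> z /List.in_map_iff [b [<- _]].
    apply: (@mk_le _ _ [:: b]) => //.
    - move=> K; right; apply: (@rr_Lplus _ (fun _ => True)); first by case: alpha.
      case: K => v Hv; exists v; have := Bsub_rr [:: b] (conj BW SW); case=> _; apply; exact: Hv.
    - exact: Bsub_rr.
  move=> y Hy Hyn Hle.
  case: (isE_some Hy Hyn) => g [W' [Ey [_ [HB' [v Hv]]]]]; subst y.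
  case: (Sle_char (ex_intro _ v Hv) Hle) => d [Eg Hs]; subst g.
  clear Hy Hyn; case: d Hs HB' Hle => [|b d'] Hs HB' Hle.
    rewrite cats0 in HB'.
    case: (classic (exists b, b \in s /\ nonempty (rr W' [:: b]))) => [[b [Hb [u Hu]]]|K].
      exists (f b); split; first by apply: List.in_map; apply: mem_In.
      rewrite /f mkS_ne; last by exists u; exact: rr_mono Hu.
      rewrite cats0 Sle1; apply: Smul_ne; exists u; split=> //; exact: rr_mono Hu.
    have Hsink : forall b, ~ nonempty (rr W' [:: b]).
      move=> b Hb; case: (boolP (b \in s)) => Hbs; first by apply: K; exists b.
      apply: (Hn' b Hbs); case: Hb => u Hu; exists u; exact: rr_mono Hu.
    case: (UL HB' (ex_intro _ v Hv)) => Gf [HGf HGW'].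
    exfalso; apply: Hno; exists Gf; split.
      split=> // b; exists W'; split=> // u Hu; apply: (Hsink b); by exists u.
    apply: (uf_up HGf HGW'); first by case: (F_B HA0).
    by move=> u /Hs /HWA.
  have Hb : b \in s.
    case: (boolP (b \in s)) => // Hbs; exfalso; apply: (Hn' b Hbs).
    by apply: (@rr_first _ _ _ d'); exists v; apply: Hs.
  exists (f b); split; first by apply: List.in_map; apply: mem_In.
  have Hne : nonempty (rr W [:: b]) by apply: (@rr_first _ _ _ d'); exists v; apply: Hs.
  rewrite /f mkS_ne //.
  have -> : alpha ++ b :: d' = (alpha ++ [:: b]) ++ d' by rewrite -catA.
  rewrite Sle2; apply: Smul_ne; exists v; split=> //; rewrite rr_comp; exact: Hs.
case: (Ht _ _ (proj2 (proj1 (F_def W) HW)) Hcov) => z [/List.in_map_iff [b [Ez _]] Hz]; subst z.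
case: Hxi' => [_ [_ [_ [Hbot _]]]].
have Hne : nonempty (rr W [:: b]) by apply: NNPP => K; apply: (Hbot _ Hz); rewrite /f mkS_e.
rewrite /f mkS_ne // in Hz.
have := xi_size Hz; rewrite size_cat /= addn1 ltnn; by [].
Qed.

Lemma forward_ab : tight B xi -> X_ B alpha F ->
  ((exists (L : Type) (le : L -> L -> Prop) (Fn : L -> vset G -> Prop),
       directed le /\ (forall l, X_sink B alpha (Fn l)) /\
       converges B alpha le Fn F)
    \/
    (exists (L : Type) (le : L -> L -> Prop) (t : L -> alph G)
            (Fn : L -> vset G -> Prop),
       directed le /\
       (forall l, X_ B (alpha ++ [:: t l]) (Fn l)) /\
       converges B alpha le (fun l => f_at B alpha (t l) (Fn l)) F /\
       (forall b : alph G, exists lb, forall l, le lb l -> t l <> b))).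
Proof.
move=> Ht Huf.
case: (classic (forall X, F X -> exists Gf, X_sink B alpha Gf /\ Gf X)) => K.
  by left; apply: net_a.
right; apply: net_b => //.
have [A0 [HA0 Hno]] : exists A0, F A0 /\ ~ (exists Gf, X_sink B alpha Gf /\ Gf A0).
  apply: NNPP => K'; apply: K => X HX; apply: NNPP => K''; apply: K'; by exists X.
move=> X HX s.
case: (F_meet HX HA0) => W [HW [W1 W2]].
case: (no_sink_claim Ht HA0 Hno HW W2 s) => t [Hts Hne].
exists t; split=> //.
have HB : Bsub B (alpha ++ [:: t]) (rr W [:: t]) by apply: Bsub_rr; case: (F_B HW).
case: (UL HB Hne) => Gf [HGf HGW].
exists Gf; split=> //; apply: (uf_up HGf HGW); last exact: rr_mono.
by apply: Bsub_rr; case: (F_B HX).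
Qed.

Lemma L1 (Huf : X_ B alpha F) (Z : seq (Selt G)) A : F A -> (forall z, List.In z Z -> isE B z /\ ~ xi z) ->
  exists A', F A' /\ subs A' A /\ forall z, List.In z Z -> forall g W d,
     z = idem g W -> alpha = g ++ d -> ~ nonempty (setI (rr W d) A').
Proof.
move=> HA; elim: Z => [|z Z IH] HZ.
  by exists A; split=> //; split.
case: IH => [z' Hz'|A1 [HA1 [S1 H1]]]; first by apply: HZ; right.
case: (classic (exists g W d, z = idem g W /\ alpha = g ++ d)) => [[g [W [d [Ez Ed]]]]|K].
  have [HzE Hzx] := HZ z (or_introl erefl).
  case: (isE_some HzE) => [|g' [W' [Ez' [HL' [HB' _]]]]]; first by rewrite Ez.
  rewrite Ez in Ez'; case: (idem_inj Ez') => Eg EW; subst g' W'.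
  have HC : Bsub B alpha (rr W d) by rewrite Ed; apply: Bsub_rr.
  have HnC : ~ F (rr W d).
    move=> HFC; apply: Hzx; rewrite Ez; exact: (xi_of_F HL' HB' Ed HFC).
  case: (uf_sep Huf HC HnC) => D [HD HDC].
  case: (F_meet HA1 HD) => A2 [HA2 [T1 T2]].
  exists A2; split=> //; split; first by move=> v /T1 /S1.
  move=> z0 [Ez0|Hz0] g' W' d' E1 E2.
    subst z0; rewrite Ez in E1; case: (idem_inj E1) => Eg EW; subst g' W'.
    have Edd : d' = d by apply: (@cat_injl _ g); rewrite -E2.
    subst d'; move=> [v [Hv1 Hv2]]; apply: HDC; exists v; split=> //; exact: T2.
  move=> [v [Hv1 Hv2]]; apply: (H1 z0 Hz0 g' W' d' E1 E2); exists v; split=> //; exact: T1.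
exists A1; split=> //; split=> //.
move=> z0 [Ez0|Hz0] g' W' d' E1 E2.
  by exfalso; apply: K; exists g', W', d'; subst z0.
exact: (H1 z0 Hz0 g' W' d' E1 E2).
Qed.

Lemma L2 (Z : seq (Selt G)) Gf A' : X_sink B alpha Gf -> Gf A' ->
  exists W0, Gf W0 /\ subs W0 A' /\ forall z, List.In z Z -> forall g W b e,
     z = idem g W -> g = alpha ++ b :: e -> ~ nonempty (rr W0 [:: b]).
Proof.
move=> [Huf Hsk] HA; elim: Z => [|z Z IH].
  by exists A'; split=> //; split.
case: IH => W1 [HW1 [S1 H1]].
case: (classic (exists g W b e, z = idem g W /\ g = alpha ++ b :: e)) => [[g [W [b [e [Ez Eg]]]]]|K].
  case: (Hsk b) => E [HE HEe].
  case: (uf_meet Huf HW1 HE) => W2 [HW2 [T1 T2]].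
  exists W2; split=> //; split; first by move=> v /T1 /S1.
  move=> z0 [Ez0|Hz0] g' W' b' e' E1 E2.
    subst z0; rewrite Ez in E1; case: (idem_inj E1) => Eg' EW.
    rewrite -Eg' Eg in E2; have := cat_injl E2; case=> Ebb _; subst b'.
    move=> [v Hv]; apply: (HEe v); exact: rr_mono Hv.
  move=> [v Hv]; apply: (H1 z0 Hz0 g' W' b' e' E1 E2); exists v; exact: rr_mono Hv.
exists W1; split=> //; split=> //.
move=> z0 [Ez0|Hz0] g' W' b' e' E1 E2.
  by exfalso; apply: K; exists g', W', b', e'; subst z0.
exact: (H1 z0 Hz0 g' W' b' e' E1 E2).
Qed.

Lemma L3 (L : Type) (le : L -> L -> Prop) (t : L -> alph G) (Z : seq (Selt G)) :
  directed le -> (forall b, exists lb, forall l, le lb l -> t l <> b) ->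
  exists l0, forall l, le l0 l -> forall z, List.In z Z -> forall g W b e,
     z = idem g W -> g = alpha ++ b :: e -> t l <> b.
Proof.
move=> [[l00 _] [Hrefl [Htr Hub]]] Hev; elim: Z => [|z Z IH].
  by exists l00.
case: IH => l0 H0.
case: (classic (exists g W b e, z = idem g W /\ g = alpha ++ b :: e)) => [[g [W [b [e [Ez Eg]]]]]|K].
  case: (Hev b) => lb Hlb.
  case: (Hub l0 lb) => l3 [L1' L2'].
  exists l3 => l Hl z0 [Ez0|Hz0] g' W' b' e' E1 E2.
    subst z0; rewrite Ez in E1; case: (idem_inj E1) => Eg' EW.
    rewrite -Eg' Eg in E2; have := cat_injl E2; case=> Ebb _; subst b'.
    apply: Hlb; exact: Htr L2' Hl.
  exact: (H0 l (Htr _ _ _ L1' Hl) z0 Hz0 g' W' b' e' E1 E2).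
exists l0 => l Hl z0 [Ez0|Hz0] g' W' b' e' E1 E2.
  by exfalso; apply: K; exists g', W', b', e'; subst z0.
exact: (H0 l Hl z0 Hz0 g' W' b' e' E1 E2).
Qed.

Lemma reverse (Huf : X_ B alpha F) :
  ((exists (L : Type) (le : L -> L -> Prop) (Fn : L -> vset G -> Prop),
       directed le /\ (forall l, X_sink B alpha (Fn l)) /\
       converges B alpha le Fn F)
    \/
    (exists (L : Type) (le : L -> L -> Prop) (t : L -> alph G)
            (Fn : L -> vset G -> Prop),
       directed le /\
       (forall l, X_ B (alpha ++ [:: t l]) (Fn l)) /\
       converges B alpha le (fun l => f_at B alpha (t l) (Fn l)) F /\
       (forall b : alph G, exists lb, forall l, le lb l -> t l <> b))) ->
  tight B xi.
Proof.
move=> Hab x Z Hx [Hel Hc].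
apply: NNPP => Hno.
have HZ : forall z, List.In z Z -> isE B z /\ ~ xi z.
  move=> z Hz; split; first by case: (Hel z Hz).
  by move=> Hxz; apply: Hno; exists z.
case: (xi_form Hx) => beta [X [Ex [HLb [HBX HXn]]]]; subst x.
case: (xi_pre Hx) => delta [A [Ed [HA HAX]]].
case: (L1 Huf HA HZ) => A' [HA' [SA' H1]].
have [[BA' SA'r] [HA'n HLa]] := F_B HA'.
have Hlex : forall g W0 d', nonempty W0 -> g = alpha ++ d' -> subs W0 (rr A d') ->
    Sle (idem g W0) (idem beta X).
  move=> g W0 d' Hn Eg Hs; apply: (@Sle_of _ _ _ _ (delta ++ d') Hn).
    by rewrite Eg Ed catA.
  rewrite -rr_comp; move=> v /Hs; exact: rr_mono.
have Hzform : forall z, List.In z Z -> Smul z (idem alpha A') <> None \/ True ->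
    z = None \/ exists g W, z = idem g W /\ Bsub B g W.
  move=> z Hz _; case: (classic (z = None)) => K; first by left.
  right; case: (isE_some (proj1 (HZ z Hz)) K) => g [W [Ez [_ [HB _]]]]; by exists g, W.
case: Hab => [[L [le [Fn [Hdir [Hsink Hconv]]]]]|[L [le [t [Fn [Hdir [HX [Hconv Hev]]]]]]]].
- have [[l0 _] [Hrefl _]] := Hdir.
  case: (Hconv A' (conj BA' SA'r)) => l Hl.
  have HGA' : Fn l A' by apply/(Hl l (Hrefl l)).
  case: (L2 Z (Hsink l) HGA') => W0 [HW0 [S0 H2]].
  have Huf0 := proj1 (Hsink l).
  have HW0n := uf_ne Huf0 HW0.
  have HW0B := uf_car Huf0 HW0.
  have Hy : isE B (idem alpha W0) by apply: isE_idem.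
  case: (Hc (idem alpha W0) Hy (fun E => ltac:(discriminate E))) => [|z [Hz Hzy]].
    apply: (Hlex _ _ [::] HW0n); first by rewrite cats0.
    by move=> v /S0 /SA'.
  case: (Hzform z Hz (or_intror I)) => [Ez|[g [W [Ez HBW]]]]; first by subst z.
  subst z; apply: Hzy.
  case: (classic (exists d, alpha = g ++ d)) => [[d Ed2]|K1].
    rewrite [in X in Smul _ X]Ed2 Sle2 mkS_e // => [[v [Hv1 Hv2]]].
    apply: (H1 _ Hz g W d erefl Ed2); exists v; split=> //; exact: S0.
  case: (classic (exists d, g = alpha ++ d)) => [[d Eg]|K2].
    case: d Eg => [|b e] Eg.
      by exfalso; apply: K1; exists [::]; rewrite Eg !cats0.
    rewrite Eg Sle1 mkS_e // => [[v [_ Hv]]].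
    apply: (H2 _ Hz g W b e erefl Eg); apply: (@rr_first _ _ _ e); by exists v.
  apply: Sinc => d Ed'; [apply: K2|apply: K1]; by exists d.
- case: (L3 Z Hdir Hev) => l0 H3.
  case: (Hconv A' (conj BA' SA'r)) => l1 Hl1.
  have [_ [Hrefl [Htr Hub]]] := Hdir.
  case: (Hub l0 l1) => l [Hl0 Hl1'].
  have [_ HGY] : f_at B alpha (t l) (Fn l) A' by apply/(Hl1 l Hl1').
  set tl := t l in HGY *.
  set Y := rr A' [:: tl] in HGY *.
  have Huf0 := HX l.
  have HYn := uf_ne Huf0 HGY.
  have HYB := uf_car Huf0 HGY.
  have Hy : isE B (idem (alpha ++ [:: tl]) Y).
    apply: isE_idem => //; right; apply: (@rr_Lplus _ (fun _ => True)); first by case: alpha.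
    case: HYn => v Hv; exists v; case: HYB => _; apply; exact: Hv.
  case: (Hc _ Hy (fun E => ltac:(discriminate E))) => [|z [Hz Hzy]].
    apply: (Hlex _ _ [:: tl] HYn) => //; exact: rr_mono.
  case: (Hzform z Hz (or_intror I)) => [Ez|[g [W [Ez HBW]]]]; first by subst z.
  subst z; apply: Hzy.
  case: (classic (exists d, alpha = g ++ d)) => [[d Ed2]|K1].
    have -> : alpha ++ [:: tl] = g ++ (d ++ [:: tl]) by rewrite Ed2 catA.
    rewrite Sle2 mkS_e //.
    rewrite -rr_comp; apply: rr_disj; [apply: B_rr; by case: HBW | exact: BA' |].
    exact: (H1 _ Hz g W d erefl Ed2).
  case: (classic (exists d, g = alpha ++ d)) => [[d Eg]|K2].
    case: d Eg => [|b e] Eg.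
      by exfalso; apply: K1; exists [::]; rewrite Eg !cats0.
    have Hbt : tl <> b := H3 l Hl0 _ Hz g W b e erefl Eg.
    apply: Sinc => d' Ed'.
      by apply: Hbt; move: Ed'; rewrite Eg -catA /= => /cat_injl [].
    by apply: Hbt; move: Ed'; rewrite Eg -catA /= => /cat_injl [].
  apply: Sinc => d' Ed'.
    by apply: K2; exists (tl :: d'); rewrite Ed' -catA.
  case/lastP: d' Ed' => [|d'' c] Ed'.
    by apply: K2; exists [:: tl]; rewrite Ed' cats0.
  apply: K1; exists d''; move: Ed'; rewrite cats1 -rcons_cat => /rcons_inj.
  by case.
Qed.
End Sg.

Theorem mainTheorem17 (G : lgraph)
  (HV : inhabited (vtx G))
  (Hsurj : forall a : alph G, exists e : edg G, lab e = a)
  (B : vset G -> Prop)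
  (Hacc : accommodating B) (Hwlr : weakly_left_resolving B)
  (Hrc : relcomp_closed B)
  (xi : Selt G -> Prop) (alpha : word G)
  (Hxi : ES_filter B xi) (Hft : finite_type xi alpha) :
  tight B xi <->
  (X_ B alpha (xi_n B xi alpha (size alpha)) /\
   ((exists (L : Type) (le : L -> L -> Prop) (Fn : L -> vset G -> Prop),
       directed le /\ (forall l, X_sink B alpha (Fn l)) /\
       converges B alpha le Fn (xi_n B xi alpha (size alpha)))
    \/
    (exists (L : Type) (le : L -> L -> Prop) (t : L -> alph G)
            (Fn : L -> vset G -> Prop),
       directed le /\
       (forall l, X_ B (alpha ++ [:: t l]) (Fn l)) /\
       converges B alpha le (fun l => f_at B alpha (t l) (Fn l))
                 (xi_n B xi alpha (size alpha)) /\
       (forall b : alph G, exists lb, forall l, le lb l -> t l <> b)))).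
Proof.
split.
  move=> Ht.
  have Huf : X_ B alpha (xi_n B xi alpha (size alpha)) by eapply tight_uf; eauto.
  split=> //; eapply forward_ab; eauto.
move=> [Huf Hab]; eapply reverse; eauto.
Qed.
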